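(* Let $V$ be a finite set. Let $\mathcal{E}:=\{\hat X\in\mathbb{S}^{\{0\}\cup V}_+ : \hat X_{ii}=1\ \forall i\in\{0\}\cup V\}$, $\mathcal{E}':=\{\hat X\in\mathcal{E} : (e_0+e_i)^{\mathsf T}\hat X(e_0+e_j)\ge 0\ \forall ij\in\binom{V}{2}\}$, and $\mathcal{E}'':=\{\hat X\in\mathcal{E} : (e_0-e_i)^{\mathsf T}\hat X(e_0-e_j)\ge 0\ \forall ij\in\binom{V}{2}\}$. Let $\hat{\mathcal{C}}\in\{\mathcal{E},\mathcal{E}',\mathcal{E}''\}$. Then a point $\hat X$ of $\hat{\mathcal{C}}$ is a vertex of $\hat{\mathcal{C}}$ if and only if $\operatorname{rank}(\hat X)=1$. Thus the vertices of $\hat{\mathcal{C}}$ are precisely the matrices $(1\oplus x_S)(1\oplus x_S)^{\mathsf T}$ where $x_S=\chi^S-\chi^{V\setminus S}$ for some $S\subseteq V$.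
   Context: $0$ is a new index not in $V$; $\mathbb{S}^{W}_+$ denotes real symmetric positive semidefinite matrices indexed by $W$, with trace inner product; $e_i$ are standard basis vectors of $\mathbb{R}^{\{0\}\cup V}$. $\chi^S\in\{0,1\}^V$ is the incidence vector of $S$; $1\oplus x\in\mathbb{R}^{\{0\}\cup V}$ has $0$-entry $1$. For a convex set $\mathcal{C}$ in a finite-dimensional space $\mathbb{E}$ and $\bar x\in\mathcal{C}$, the normal cone is $N_{\mathcal{C}}(\bar x):=\{c : \langle c,x\rangle\le\langle c,\bar x\rangle\ \forall x\in\mathcal{C}\}$; $\bar x$ is a vertex if $\dim N_{\mathcal{C}}(\bar x)=\dim\mathbb{E}$. *)

(* Defs.v *)
From HB Require Import structures.
From mathcomp Require Import all_boot all_order all_algebra.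
From mathcomp Require Import reals.
Set Implicit Arguments. Unset Strict Implicit. Unset Printing Implicit Defensive.
Import Order.TTheory GRing.Theory Num.Theory.
Local Open Scope ring_scope.

(* V = 'I_n ; {0} ∪ V = 'I_n.+1 with index 0 = ord0 and i ∈ V ↦ lift ord0 i. *)
Section Defs.
Variables (R : realType) (n : nat).
Notation M := 'M[R]_(n.+1).

Definition idx (i : 'I_n) : 'I_n.+1 := lift ord0 i.

Definition e_ (k : 'I_n.+1) : 'cV[R]_(n.+1) := delta_mx k 0.

Definition qform (u : 'cV[R]_(n.+1)) (X : M) (v : 'cV[R]_(n.+1)) : R :=
  (u^T *m X *m v) 0 0.

Definition symmetric (X : M) : Prop := X^T = X.

Definition psd (X : M) : Prop :=
  symmetric X /\ forall v : 'cV[R]_(n.+1), 0 <= qform v X v.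

Definition ellE (X : M) : Prop := psd X /\ forall k : 'I_n.+1, X k k = 1.

(* E' and E'' ; ij ranges over unordered pairs, encoded by i < j *)
Definition ellE' (X : M) : Prop :=
  ellE X /\ forall i j : 'I_n, (i < j)%N ->
    0 <= qform (e_ ord0 + e_ (idx i)) X (e_ ord0 + e_ (idx j)).

Definition ellE'' (X : M) : Prop :=
  ellE X /\ forall i j : 'I_n, (i < j)%N ->
    0 <= qform (e_ ord0 - e_ (idx i)) X (e_ ord0 - e_ (idx j)).

Definition tip (A B : M) : R := \tr (A^T *m B).

Definition normal_cone (C : M -> Prop) (Xbar : M) (c : M) : Prop :=
  symmetric c /\ forall X, C X -> tip c X <= tip c Xbar.

(* dim N = dim E: the normal cone (a convex cone containing 0, so its
   affine hull is its linear span) spans the whole space of symmetric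
   matrices. *)
Definition full_dim (N : M -> Prop) : Prop :=
  exists s : seq M, (forall c, c \in s -> N c) /\
    forall A : M, symmetric A -> A \in <<s>>%VS.

Definition vertex (C : M -> Prop) (Xbar : M) : Prop :=
  C Xbar /\ full_dim (normal_cone C Xbar).

Definition one_plus_xS (S : {set 'I_n}) : 'cV[R]_(n.+1) :=
  \col_k (match unlift ord0 k with
          | Some i => if i \in S then 1 else -1
          | None => 1
          end).

End Defs.

(* Main.v *)
Require Import Defs.
From HB Require Import structures.
From mathcomp Require Import all_boot all_order all_algebra.
From mathcomp Require Import reals.
From mathcomp Require Import ring lra.
Import Order.TTheory GRing.Theory Num.Theory.
Local Open Scope ring_scope.
Set Implicit Arguments. Unset Strict Implicit. Unset Printing Implicit Defensive.

Section Q.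
Variables (R : realType) (n : nat).
Notation N := n.+1.
Implicit Types (X A : 'M[R]_N) (u v w : 'cV[R]_N).

Lemma qformDl u1 u2 X v : qform (u1 + u2) X v = qform u1 X v + qform u2 X v.
Proof. by rewrite /qform linearD /= !mulmxDl mxE. Qed.
Lemma qformDr u X v1 v2 : qform u X (v1 + v2) = qform u X v1 + qform u X v2.
Proof. by rewrite /qform mulmxDr mxE. Qed.
Lemma qformZl a u X v : qform (a *: u) X v = a * qform u X v.
Proof. by rewrite /qform linearZ /= -!scalemxAl mxE. Qed.
Lemma qformZr a u X v : qform u X (a *: v) = a * qform u X v.
Proof. by rewrite /qform -scalemxAr mxE. Qed.
Lemma qformNl u X v : qform (- u) X v = - qform u X v.
Proof. by rewrite -scaleN1r qformZl mulN1r. Qed.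
Lemma qformNr u X v : qform u X (- v) = - qform u X v.
Proof. by rewrite -scaleN1r qformZr mulN1r. Qed.
Lemma qformBl u1 u2 X v : qform (u1 - u2) X v = qform u1 X v - qform u2 X v.
Proof. by rewrite qformDl qformNl. Qed.
Lemma qformBr u X v1 v2 : qform u X (v1 - v2) = qform u X v1 - qform u X v2.
Proof. by rewrite qformDr qformNr. Qed.
Lemma qform_delta X (i j : 'I_N) : qform (e_ R i) X (e_ R j) = X i j.
Proof.
rewrite /qform /e_ trmx_delta -rowE -colE !mxE.
done.
Qed.
Lemma qform_sym X u v : Defs.symmetric X -> qform u X v = qform v X u.
Proof.
move=> hX; rewrite /qform.
have E (M : 'M[R]_1) : M 0 0 = M^T 0 0 by rewrite mxE.
rewrite E.
by rewrite !trmx_mul trmxK hX mulmxA.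
Qed.
Lemma qform_cong A X u v :
  qform u (A *m X *m A^T) v = qform (A^T *m u) X (A^T *m v).
Proof. by rewrite /qform trmx_mul trmxK !mulmxA. Qed.
End Q.
Section E.
Variables (R : realType) (n : nat).
Notation N := n.+1.
Implicit Types (X A : 'M[R]_N) (u v w : 'cV[R]_N).

Lemma qform_expand X u w (t : R) : Defs.symmetric X ->
  qform (u + t *: w) X (u + t *: w) =
  qform u X u + 2 * t * qform w X u + t ^+ 2 * qform w X w.
Proof.
move=> hX; rewrite !qformDl !qformDr !qformZl !qformZr (qform_sym u w hX).
ring.
Qed.

Lemma psd_null X u : psd X -> qform u X u = 0 -> forall w, qform w X u = 0.
Proof.
move=> [hs hp] h0 w.
set b := qform w X u; set g := qform w X w.
have g0 : 0 <= g by apply: hp.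
have g1 : g + 1 != 0 by rewrite gt_eqF // ltr_wpDl.
have := hp (u + (- b / (g + 1)) *: w).
rewrite qform_expand // h0 -/b -/g.
have -> : 0 + 2 * (- b / (g + 1)) * b + (- b / (g + 1)) ^+ 2 * g
   = - (b ^+ 2 * (g + 2)) / (g + 1) ^+ 2.
  by field.
rewrite pmulr_lge0 ?invr_gt0 ?exprn_gt0 ?ltr_wpDl // oppr_ge0.
move=> H; apply/eqP; rewrite -sqrf_eq0 eq_le sqr_ge0 andbT.
by rewrite -(pmulr_lle0 _ (_ : 0 < g + 2)) ?ltr_wpDl.
Qed.

Lemma ellE_sym X : ellE X -> Defs.symmetric X.
Proof. by case=> [[]]. Qed.

Lemma ellE_bound X i j : ellE X -> -1 <= X i j <= 1.
Proof.
move=> [[hs hp] hd].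
have hij : X j i = X i j by rewrite -{1}hs mxE.
have h1 := hp (e_ R i + e_ R j).
have h2 := hp (e_ R i - e_ R j).
rewrite !qformDl !qformDr !qform_delta !hd hij in h1.
rewrite !qformBl !qformBr !qform_delta !hd hij in h2.
apply/andP; split; lra.
Qed.
End E.
Section Tip.
Variables (R : realType) (n : nat).
Notation N := n.+1.
Implicit Types (X Z c d : 'M[R]_N).

Lemma tipDl c d Z : tip (c + d) Z = tip c Z + tip d Z.
Proof. by rewrite /tip linearD /= mulmxDl mxtraceD. Qed.
Lemma tipZl a c Z : tip (a *: c) Z = a * tip c Z.
Proof. by rewrite /tip linearZ /= -scalemxAl mxtraceZ. Qed.
Lemma tipBr c Z1 Z2 : tip c (Z1 - Z2) = tip c Z1 - tip c Z2.
Proof. by rewrite /tip mulmxBr linearB. Qed.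
Lemma tipDr c Z1 Z2 : tip c (Z1 + Z2) = tip c Z1 + tip c Z2.
Proof. by rewrite /tip mulmxDr mxtraceD. Qed.
Lemma tipZr a c Z : tip c (a *: Z) = a * tip c Z.
Proof. by rewrite /tip -scalemxAr mxtraceZ. Qed.
Lemma tip_suml (I : Type) (r : seq I) (P : pred I) (F : I -> 'M[R]_N) Z :
  tip (\sum_(i <- r | P i) F i) Z = \sum_(i <- r | P i) tip (F i) Z.
Proof.
elim/big_rec2: _ => [|i y1 y2 _ <-]; last by rewrite tipDl.
by rewrite /tip linear0 mul0mx mxtrace0.
Qed.
Lemma tip_delta (i j : 'I_N) Z : tip (delta_mx i j) Z = Z i j.
Proof.
rewrite /tip trmx_delta /mxtrace (bigD1 j) //= big1 ?addr0.
  rewrite mxE (bigD1 i) //= big1 ?addr0 ?mxE ?eqxx ?mul1r //.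
  by move=> l /negbTE hl; rewrite mxE hl andbF mul0r.
move=> k /negbTE hk; rewrite mxE.
by apply: big1 => l _; rewrite mxE hk mul0r.
Qed.
Lemma tip_self Z : tip Z Z = \sum_j \sum_i Z i j ^+ 2.
Proof.
rewrite /tip /mxtrace; apply: eq_bigr => j _; rewrite mxE.
by apply: eq_bigr => i _; rewrite mxE expr2.
Qed.
Lemma tip_self_eq0 Z : tip Z Z = 0 -> Z = 0.
Proof.
rewrite tip_self => H; apply/matrixP => i j; rewrite mxE.
have Hj : \sum_i Z i j ^+ 2 = 0.
  apply: (psumr_eq0P _ H) => // k _; apply: sumr_ge0 => l _; exact: sqr_ge0.
have := psumr_eq0P (fun i _ => sqr_ge0 (Z i j)) Hj (i:=i) isT.
by move/eqP; rewrite sqrf_eq0 => /eqP.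
Qed.
End Tip.
Section Cut.
Variables (R : realType) (n : nat).
Notation N := n.+1.
Implicit Types S : {set 'I_n}.

Definition cutm (S : {set 'I_n}) : 'M[R]_N := one_plus_xS R S *m (one_plus_xS R S)^T.

Lemma cutv_pm S (i : 'I_N) : one_plus_xS R S i 0 = 1 \/ one_plus_xS R S i 0 = -1.
Proof.
rewrite mxE; case: unlift => [j|]; last by left.
by case: (j \in S); [left|right].
Qed.
Lemma cutv_sq S (i : 'I_N) : one_plus_xS R S i 0 * one_plus_xS R S i 0 = 1.
Proof. by case: (cutv_pm S i) => ->; rewrite ?mulr1 // mulN1r opprK. Qed.
Lemma cutv0 S : one_plus_xS R S ord0 0 = 1.
Proof. by rewrite mxE unlift_none. Qed.

Lemma cutm_entry S i j : cutm S i j = one_plus_xS R S i 0 * one_plus_xS R S j 0.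
Proof. by rewrite /cutm mxE big_ord1 [_^T _ _]mxE. Qed.

Lemma qform_cut S u w : qform u (cutm S) w =
  (u^T *m one_plus_xS R S) 0 0 * (w^T *m one_plus_xS R S) 0 0.
Proof.
rewrite /qform /cutm mulmxA -mulmxA mxE big_ord1; congr (_ * _).
have E (M : 'M[R]_1) : M^T 0 0 = M 0 0 by rewrite mxE.
by rewrite -(trmxK (w^T *m _)) trmx_mul trmxK E.
Qed.
Lemma cut_ellE S : ellE (cutm S).
Proof.
split; [split|].
- by rewrite /Defs.symmetric /cutm trmx_mul trmxK.
- by move=> u; rewrite qform_cut -expr2 sqr_ge0.
- by move=> k; rewrite cutm_entry cutv_sq.
Qed.

Lemma cut_ellE' S : ellE' (cutm S).
Proof.
split; first exact: cut_ellE.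
move=> i j _; rewrite !qformDl !qformDr !qform_delta !cutm_entry cutv0.
have [hi|hi] := cutv_pm S (idx i); have [hj|hj] := cutv_pm S (idx j);
  rewrite hi hj; lra.
Qed.

Lemma cut_ellE'' S : ellE'' (cutm S).
Proof.
split; first exact: cut_ellE.
move=> i j _; rewrite !qformBl !qformBr !qform_delta !cutm_entry cutv0.
have [hi|hi] := cutv_pm S (idx i); have [hj|hj] := cutv_pm S (idx j);
  rewrite hi hj; lra.
Qed.

Lemma cut_rank S : \rank (cutm S) = 1%N.
Proof.
apply/eqP; rewrite eqn_leq; apply/andP; split.
  by rewrite /cutm (leq_trans (mxrankM_maxl _ _)) // rank_leq_col.
rewrite lt0n mxrank_eq0; apply/eqP => /matrixP /(_ ord0 ord0).
by rewrite cutm_entry cutv0 mxE mulr1 => /eqP; rewrite oner_eq0.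
Qed.

Definition cvec S (i j : 'I_N) : 'M[R]_N :=
  (one_plus_xS R S i 0 * one_plus_xS R S j 0) *: (delta_mx i j + delta_mx j i).

Lemma cut_vertex S (C : 'M[R]_N -> Prop) : (forall Z, C Z -> ellE Z) -> C (cutm S) ->
  vertex C (cutm S).
Proof.
move=> hC hCX; split => //.
exists [seq cvec S p.1 p.2 | p <- enum {: 'I_N * 'I_N}]; split.
  move=> c /mapP [[i j] _ ->] /=; split.
    by rewrite /Defs.symmetric /cvec linearZ /= linearD /= !trmx_delta addrC.
  move=> Z /hC hZ.
  rewrite /cvec !tipZl !tipDl !tip_delta !cutm_entry.
  have hs := ellE_sym hZ.
  have hji : Z j i = Z i j by rewrite -{1}hs mxE.
  rewrite hji.
  have := ellE_bound i j hZ.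
  have [hi|hi] := cutv_pm S i; have [hj|hj] := cutv_pm S j; rewrite hi hj;
    move=> /andP[]; lra.
move=> A hA.
have -> : A = \sum_i \sum_j (A i j / 2 * (one_plus_xS R S i 0 * one_plus_xS R S j 0))
                *: cvec S i j.
  have HA := matrix_sum_delta A.
  have HT : A^T = \sum_i \sum_j A i j *: delta_mx j i.
    rewrite {1}HA linear_sum; apply: eq_bigr => i _.
    rewrite linear_sum; apply: eq_bigr => j _; by rewrite linearZ /= trmx_delta.
  transitivity ((1/2) *: (A + A^T)).
    by rewrite hA; apply/matrixP => x y; rewrite !mxE; field.
  rewrite HT {1}HA -big_split scaler_sumr; apply: eq_bigr => i _.
  rewrite -big_split scaler_sumr; apply: eq_bigr => j _ /=.
  rewrite /cvec scalerA -scalerDr scalerA.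
  congr (_ *: _).
  have := cutv_sq S i; have := cutv_sq S j.
  set a := one_plus_xS R S i 0; set b := one_plus_xS R S j 0.
  move=> hb ha.
  have -> : A i j / 2 * (a * b) * (a * b) = A i j / 2 * (a * a) * (b * b) by ring.
  by rewrite ha hb !mulr1 mulrC mul1r.
apply: memv_suml => i _; apply: memv_suml => j _; apply: memvZ; apply: memv_span.
by apply/mapP; exists (i, j); rewrite ?mem_enum.
Qed.
End Cut.
Section Char.
Variables (R : realType) (n : nat).
Notation N := n.+1.
Implicit Types (X : 'M[R]_N).

Lemma ellE_diag X i : ellE X -> X i i = 1.
Proof. by case=> _ ->. Qed.

Lemma ellE_symE X i j : ellE X -> X j i = X i j.
Proof. by move=> /ellE_sym hs; rewrite -{1}hs mxE. Qed.

Lemma allpm_cut X : ellE X -> (forall j : 'I_n, X ord0 (idx j) ^+ 2 = 1) ->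
  X = cutm R [set j | X ord0 (idx j) == 1].
Proof.
move=> hX hj.
have h0 : forall i : 'I_N, X ord0 i ^+ 2 = 1.
  move=> i; case: (unliftP ord0 i) => [j ->|->]; first exact: hj.
  by rewrite ellE_diag // expr1n.
have hv : forall i : 'I_N, one_plus_xS R [set j | X ord0 (idx j) == 1] i 0 = X ord0 i.
  move=> i; rewrite mxE; case: (unliftP ord0 i) => [j ->|->].
    rewrite inE; case: ifP => [/eqP -> //|/negbT hne].
    have := hj j; move/eqP; rewrite sqrf_eq1 (negbTE hne) /= => /eqP ->.
    done.
  by rewrite ellE_diag.
apply/matrixP => a i; rewrite cutm_entry !hv.
have hn : qform (e_ R i - X ord0 i *: e_ R ord0) X (e_ R i - X ord0 i *: e_ R ord0) = 0.
  rewrite !qformBl !qformBr !qformZl !qformZr !qform_delta !ellE_diag //.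
  rewrite (ellE_symE ord0 i hX).
  have := h0 i; rewrite expr2 => h; rewrite mulr1 h; ring.
have := psd_null (proj1 hX) hn (e_ R a).
rewrite qformBr qformZr !qform_delta => /eqP; rewrite subr_eq0 => /eqP ->.
by rewrite (ellE_symE ord0 a hX) mulrC.
Qed.

Lemma rank1_pm X : ellE X -> \rank X = 1%N -> forall j : 'I_n, X ord0 (idx j) ^+ 2 = 1.
Proof.
move=> hX hr j.
have hb := mulmx_base X.
move: (col_base X) (row_base X) hb; rewrite hr => cb rb hb.
have hE : forall a b, X a b = cb a 0 * rb 0 b.
  by move=> a b; rewrite -hb mxE big_ord1.
have h2 := ellE_diag ord0 hX; have h1 := ellE_diag (idx j) hX.
rewrite !hE in h1 h2.
rewrite expr2 -{1}(ellE_symE ord0 (idx j) hX) !hE.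
have -> : cb (idx j) 0 * rb 0 ord0 * (cb ord0 0 * rb 0 (idx j)) =
   (cb (idx j) 0 * rb 0 (idx j)) * (cb ord0 0 * rb 0 ord0) by ring.
by rewrite h1 h2 mulr1.
Qed.
End Char.
Lemma small_T (R : realType) (h d0 T G : R) : 0 <= h -> 0 < d0 ->
  (forall t, 0 < t -> t <= d0 ->
     (1 - t ^+ 2 * h) * T + 2 * t * G <= 0 /\ - ((1 - t ^+ 2 * h) * T) + 2 * t * G <= 0) ->
  T = 0.
Proof.
move=> h0 d00 H; apply/eqP/negPn/negP => hT.
have aT : 0 < `|T| by rewrite normr_gt0.
set M := d0^-1 + 2 * (h + 1) + (4 * `|G| + 4) / `|T|.
have M1 : 0 <= d0^-1 by rewrite invr_ge0 ltW.
have M2 : 0 <= (4 * `|G| + 4) / `|T|.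
  by apply: divr_ge0; [have := normr_ge0 G; lra | exact: ltW].
have M0 : 0 < M by rewrite /M; lra.
set t := M^-1.
have t0 : 0 < t by rewrite invr_gt0.
have tM : t * M = 1 by rewrite mulVf // gt_eqF.
have dd : d0 * d0^-1 = 1 by rewrite mulfV ?gt_eqF.
have td : t <= d0.
  rewrite /t -[M^-1]mul1r ler_pdivrMr // /M -addrA mulrDr dd.
  have r0 : 0 <= 2 * (h + 1) + (4 * `|G| + 4) / `|T| by lra.
  have := mulr_ge0 (ltW d00) r0; lra.
have th : t * (2 * (h + 1)) <= 1.
  rewrite -[leRHS]tM ler_pM2l // /M; lra.
have tg : t * (4 * `|G| + 4) <= `|T|.
  have : t * ((4 * `|G| + 4) / `|T|) <= 1.
    rewrite -[leRHS]tM ler_pM2l // /M; lra.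
  by rewrite mulrA ler_pdivrMr // mul1r.
have [H1 H2] := H t t0 td.
have key : (1 - t ^+ 2 * h) * `|T| <= 2 * t * `|G|.
  have hG : - G <= `|G| by rewrite -normrN ler_norm.
  have hG' : t * - G <= t * `|G| by rewrite ler_pM2l.
  have [Tp|Tn|T0] := ltrgt0P T; last by rewrite T0 eqxx in hT.
    lra.
  lra.
have ht1 : t <= 1/2 by nra.
have ht2 : t * h <= 1/2 by nra.
have ht3 : t ^+ 2 * h <= 1/4 by rewrite expr2 -mulrA; nra.
nra.
Qed.
Section Curve.
Variables (R : realType) (n : nat) (X : 'M[R]_(n.+1)) (sg : R) (k : 'I_n).
Hypotheses (hX : ellE X) (hsg : sg = 1 \/ sg = -1).
Notation N := n.+1.
Notation B u v := (qform u X v).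
Notation E i := (e_ R i).
Notation x0 i := (X ord0 i).

Let sg2 : sg * sg = 1.
Proof. by case: hsg => ->; rewrite ?mulr1 // mulN1r opprK. Qed.
Let hs : Defs.symmetric X := ellE_sym hX.
Let Bsym u v : B u v = B v u. Proof. exact: qform_sym. Qed.
Let Bd (i j : 'I_N) : B (E i) (E j) = X i j. Proof. exact: qform_delta. Qed.
Let Xd i : X i i = 1. Proof. exact: ellE_diag. Qed.
Let Xs i j : X j i = X i j. Proof. exact: ellE_symE. Qed.

Definition cy : 'cV[R]_N := locked (E (idx k) - x0 (idx k) *: E ord0).
Lemma cyE : cy = E (idx k) - x0 (idx k) *: E ord0. Proof. by rewrite /cy -lock. Qed.
Definition ch : R := B cy cy.
Definition cw (j : 'I_n) : 'cV[R]_N := locked (E ord0 + sg *: E (idx j)).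
Lemma cwE j : cw j = E ord0 + sg *: E (idx j). Proof. by rewrite /cw -lock. Qed.
Definition cp j := B (E ord0) (cw j).
Definition cb j := B cy (cw j).
Definition cc j := cb j / cp j.
Definition ceta (i : 'I_N) : 'cV[R]_N :=
  match unlift ord0 i with Some j => sg *: (cc j *: cw j - cy) | None => cy end.
Definition cal (t : R) := (1 - t ^+ 2 * ch) / (1 + t ^+ 2 * ch).
Definition cbe (t : R) := 2 * t / (1 + t ^+ 2 * ch).
Definition cr t i := cal t *: E i + cbe t *: ceta i.
Definition cA t : 'M[R]_N := \matrix_(i, l) cr t i l 0.
Definition cY t := cA t *m X *m (cA t)^T.
Definition cD : 'M[R]_N := \matrix_(i, j) (B (E i) (ceta j) + B (ceta i) (E j)).
Definition cF : 'M[R]_N := \matrix_(i, j) B (ceta i) (ceta j).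

Lemma B_e0y : B (E ord0) cy = 0.
Proof. by rewrite cyE qformBr qformZr !Bd Xd mulr1 subrr. Qed.

Lemma ch_ge0 : 0 <= ch.
Proof. by case: hX => [[_ hp] _]; apply: hp. Qed.

Lemma cq_gt0 t : 0 < 1 + t ^+ 2 * ch.
Proof. have := mulr_ge0 (sqr_ge0 t) ch_ge0; lra. Qed.

Lemma calbe t : cal t ^+ 2 + cbe t ^+ 2 * ch = 1.
Proof.
have q0 : 1 + t ^+ 2 * ch != 0 by rewrite gt_eqF ?cq_gt0.
rewrite /cal /cbe; field => //.
Qed.

Lemma cpE j : cp j = 1 + sg * x0 (idx j).
Proof. by rewrite /cp cwE qformDr qformZr !Bd Xd. Qed.

Lemma Bww j : B (cw j) (cw j) = 2 * cp j.
Proof.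
rewrite cpE cwE !qformDl !qformDr !qformZl !qformZr !Bd !Xd Xs.
have := sg2; move=> e; rewrite mulrA e; ring.
Qed.

Lemma cbE j : cb j = sg * B cy (E (idx j)).
Proof. by rewrite /cb cwE qformDr qformZr Bsym B_e0y add0r. Qed.

Lemma cp0 j : cp j = 0 -> cb j = 0.
Proof.
move=> h0; rewrite /cb.
by apply: (psd_null (proj1 hX)); rewrite Bww h0 mulr0.
Qed.

Lemma ccp j : cc j * cp j = cb j.
Proof.
rewrite /cc; have [h0|hp] := eqVneq (cp j) 0; first by rewrite h0 mulr0 cp0.
by rewrite divfK.
Qed.

Lemma Bey j : B (E (idx j)) cy = sg * cb j.
Proof. by rewrite cbE mulrA sg2 mul1r Bsym. Qed.

Lemma Bew j : B (E (idx j)) (cw j) = x0 (idx j) + sg.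
Proof. by rewrite cwE qformDr qformZr !Bd Xd Xs mulr1. Qed.

Lemma Bwy j : B (cw j) cy = cb j.
Proof. by rewrite Bsym. Qed.

Lemma B_e_eta i : B (E i) (ceta i) = 0.
Proof.
rewrite /ceta; case: (unliftP ord0 i) => [j ->|->]; last by rewrite B_e0y.
rewrite qformZr qformBr qformZr Bey Bew -ccp cpE.
by case: hsg => ->; ring.
Qed.

Lemma B_eta_eta i : B (ceta i) (ceta i) = ch.
Proof.
rewrite /ceta; case: (unliftP ord0 i) => [j _|_] //.
rewrite !qformZl !qformZr !qformBl !qformBr !qformZl !qformZr Bww Bwy (Bsym cy) Bwy.
rewrite -/ch -ccp.
by case: hsg => ->; ring.
Qed.

Lemma Br t i j : B (cr t i) (cr t j) = cal t ^+ 2 * X i j +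
  cal t * cbe t * (B (E i) (ceta j) + B (ceta i) (E j)) + cbe t ^+ 2 * B (ceta i) (ceta j).
Proof. rewrite /cr !qformDl !qformDr !qformZl !qformZr Bd; ring. Qed.

Lemma cY_entry t i j : cY t i j = B (cr t i) (cr t j).
Proof.
rewrite /cY /qform !mxE; apply: eq_bigr => l _; rewrite !mxE; congr (_ * _).
by apply: eq_bigr => m _; rewrite !mxE.
Qed.

Lemma cAT_e t l : (cA t)^T *m E l = cr t l.
Proof.
rewrite /e_ -colE; apply/matrixP => a b; rewrite (ord1 b) !mxE.
done.
Qed.

Lemma cY_ellE t : ellE (cY t).
Proof.
split; [split|].
- by rewrite /Defs.symmetric /cY !trmx_mul trmxK hs mulmxA.
- by move=> v; rewrite /cY qform_cong; case: hX => [[_ hp] _]; apply: hp.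
- move=> i; rewrite cY_entry Br Xd B_e_eta Bsym B_e_eta B_eta_eta addr0 mulr0 mulr1 addr0.
  exact: calbe.
Qed.

Lemma cr_w t j : cr t ord0 + sg *: cr t (idx j) = (cal t + cbe t * cc j) *: cw j.
Proof.
rewrite /cr /ceta /idx unlift_none liftK cwE.
apply/matrixP => a b; rewrite !mxE.
by case: hsg => ->; ring.
Qed.

Lemma cY_cons t i j : qform (cw i) (cY t) (cw j) =
  (cal t + cbe t * cc i) * (cal t + cbe t * cc j) * B (cw i) (cw j).
Proof.
rewrite /cY qform_cong.
have H l : (cA t)^T *m cw l = (cal t + cbe t * cc l) *: cw l.
  by rewrite -cr_w {1}cwE mulmxDr -scalemxAr !cAT_e.
by rewrite !H qformZl qformZr mulrA.
Qed.

Lemma cY_minus t : cY t - X = (cal t * cbe t) *: cD + cbe t ^+ 2 *: (cF - ch *: X).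
Proof.
have e := calbe t.
apply/matrixP => i j.
have -> : (cY t - X) i j = cY t i j - X i j by rewrite !mxE.
rewrite cY_entry Br !mxE.
have H0 : forall u v : R, u - v = (cal t ^+ 2 + cbe t ^+ 2 * ch - 1) * X i j -> u = v.
  by move=> u v; rewrite e subrr mul0r => /eqP; rewrite subr_eq0 => /eqP.
apply: H0; ring.
Qed.

Lemma cD_sym : Defs.symmetric cD.
Proof.
apply/matrixP => i j; rewrite !mxE.
by rewrite (Bsym (E j)) (Bsym (ceta j)) addrC.
Qed.

Lemma cD0k : X ord0 (idx k) ^+ 2 != 1 -> cD ord0 (idx k) != 0.
Proof.
move=> hk; rewrite mxE /ceta /idx unlift_none liftK.
rewrite qformZr qformBr qformZr.
have -> : B (E ord0) (cw k) = cp k by [].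
rewrite ccp B_e0y cbE subr0 mulrA sg2 mul1r.
have -> : B cy (E (lift ord0 k)) = 1 - X ord0 (idx k) ^+ 2.
  by rewrite cyE qformBl qformZl !Bd Xd (Xs (idx k) ord0) expr2.
rewrite -mulr2n mulrn_eq0 /= subr_eq0 eq_sym.
exact: hk.
Qed.

Lemma cal_opp t : cal (- t) = cal t.
Proof. by rewrite /cal sqrrN. Qed.
Lemma cbe_opp t : cbe (- t) = - cbe t.
Proof. by rewrite /cbe sqrrN mulrN mulNr. Qed.

Lemma cno_vertex (C : 'M[R]_N -> Prop) (d0 : R) : 0 < d0 ->
  (forall t, `|t| <= d0 -> C (cY t)) -> X ord0 (idx k) ^+ 2 != 1 ->
  ~ full_dim (normal_cone C X).
Proof.
move=> d00 hC hk [s [hsN hspan]].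
have T0 : forall c, c \in s -> tip c cD = 0.
  move=> c /hsN [_ hN].
  set T := tip c cD; set G := tip c (cF - ch *: X).
  have key : forall t, `|t| <= d0 -> cal t * cbe t * T + cbe t ^+ 2 * G <= 0.
    move=> t ht; have := hN _ (hC t ht).
    by rewrite -subr_le0 -tipBr cY_minus tipDr !tipZr.
  apply: (@small_T R ch d0 T G ch_ge0 d00) => t t0 td.
  have h1 := key t (ltac:(by rewrite ger0_norm // ltW)).
  have h2 := key (-t) (ltac:(by rewrite normrN ger0_norm // ltW)).
  rewrite cal_opp cbe_opp in h2.
  have q0 := cq_gt0 t.
  have qn : 1 + t ^+ 2 * ch != 0 by rewrite gt_eqF.
  have fp : 0 < 2 * t / (1 + t ^+ 2 * ch) ^+ 2.
    by rewrite divr_gt0 ?exprn_gt0 // mulr_gt0.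
  have E1 : cal t * cbe t * T + cbe t ^+ 2 * G =
     2 * t / (1 + t ^+ 2 * ch) ^+ 2 * ((1 - t ^+ 2 * ch) * T + 2 * t * G).
    by rewrite /cal /cbe; field.
  have E2 : cal t * - cbe t * T + (- cbe t) ^+ 2 * G =
     2 * t / (1 + t ^+ 2 * ch) ^+ 2 * (- ((1 - t ^+ 2 * ch) * T) + 2 * t * G).
    by rewrite /cal /cbe; field.
  rewrite E1 pmulr_rle0 // in h1.
  by rewrite E2 pmulr_rle0 // in h2.
have hD : cD \in <<in_tuple s>>%VS by apply: hspan; exact: cD_sym.
have ED := coord_span hD.
have : tip cD cD = 0.
  rewrite {1}ED tip_suml; apply: big1 => i _.
  by rewrite tipZl T0 ?mulr0 // mem_nth.
move/tip_self_eq0 => D0.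
by move: (cD0k hk); rewrite D0 mxE eqxx.
Qed.

Definition cS := \sum_l `|cc l|.
Definition cd0 := (1 + ch + 2 * cS)^-1.

Lemma cS_ge0 : 0 <= cS.
Proof. by apply: sumr_ge0 => l _. Qed.

Lemma cd0_gt0 : 0 < cd0.
Proof. by rewrite invr_gt0; have := cS_ge0; have := ch_ge0; lra. Qed.

Lemma cgamma_ge0 t l : `|t| <= cd0 -> 0 <= cal t + cbe t * cc l.
Proof.
move=> ht.
have Sl : `|cc l| <= cS by rewrite /cS (bigD1 l) //= lerDl sumr_ge0.
have h0 := ch_ge0; have S0 := cS_ge0.
have dd : cd0 * (1 + ch + 2 * cS) = 1 by rewrite mulVf // gt_eqF //; lra.
have a0 : 0 <= `|t| by [].
have tt : t ^+ 2 = `|t| ^+ 2 by rewrite real_normK // num_real.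
have tc : - (t * cc l) <= `|t| * cS.
  apply: le_trans (_ : `|t * cc l| <= _); first by rewrite -normrN ler_norm.
  by rewrite normrM ler_wpM2l.
have d1 : cd0 <= 1.
  rewrite -dd ler_peMr ?cd0_gt0 //; lra.
have key : 0 <= 1 - t ^+ 2 * ch + 2 * t * cc l.
  rewrite tt.
  have : `|t| ^+ 2 * ch <= `|t| * ch.
    by rewrite expr2 -mulrA ler_wpM2l // ler_piMl // ?mulr_ge0 //; lra.
  have : `|t| * (ch + 2 * cS) <= cd0 * (ch + 2 * cS).
    by rewrite ler_wpM2r //; lra.
  nra.
have q0 := cq_gt0 t.
have -> : cal t + cbe t * cc l = (1 - t ^+ 2 * ch + 2 * t * cc l) / (1 + t ^+ 2 * ch).
  by rewrite /cal /cbe; field; rewrite gt_eqF.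
by rewrite divr_ge0 // ltW.
Qed.

Lemma cY_cons_ge0 t i j : `|t| <= cd0 -> 0 <= B (cw i) (cw j) ->
  0 <= qform (cw i) (cY t) (cw j).
Proof.
move=> ht hB; rewrite cY_cons; apply: mulr_ge0 => //.
by apply: mulr_ge0; apply: cgamma_ge0.
Qed.
End Curve.
Lemma vertex_pm (R : realType) (n : nat) (C : 'M[R]_(n.+1) -> Prop) X :
  (C = @ellE R n \/ C = @ellE' R n \/ C = @ellE'' R n) ->
  vertex C X -> forall j : 'I_n, X ord0 (idx j) ^+ 2 = 1.
Proof.
move=> hC [hCX hfd] j; apply/eqP/negPn/negP => hk.
have pm1 : (1 : R) = 1 \/ (1 : R) = -1 by left.
have pm2 : (-1 : R) = 1 \/ (-1 : R) = -1 by right.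
case: hC => [hC|[hC|hC]]; subst C.
- apply: (@cno_vertex R n X 1 j hCX pm1 _ 1 ltr01 _ hk hfd) => t _.
  exact: cY_ellE.
- have hE := proj1 hCX.
  apply: (@cno_vertex R n X 1 j hE pm1 _ _ (cd0_gt0 1 j hE) _ hk hfd) => t ht.
  split; first exact: cY_ellE.
  move=> a b hab.
  have := @cY_cons_ge0 R n X 1 j hE pm1 t a b ht.
  rewrite !cwE !scale1r; apply.
  exact: (proj2 hCX).
- have hE := proj1 hCX.
  apply: (@cno_vertex R n X (-1) j hE pm2 _ _ (cd0_gt0 (-1) j hE) _ hk hfd) => t ht.
  split; first exact: cY_ellE.
  move=> a b hab.
  have := @cY_cons_ge0 R n X (-1) j hE pm2 t a b ht.
  rewrite !cwE !scaleN1r; apply.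
  exact: (proj2 hCX).
Qed.

Unset Implicit Arguments.

Theorem corollary3p4 (R : realType) (n : nat) (C : 'M[R]_(n.+1) -> Prop) :
  (C = @ellE R n \/ C = @ellE' R n \/ C = @ellE'' R n) ->
  (forall X : 'M[R]_(n.+1), C X -> (vertex C X <-> \rank X = 1%N)) /\
  (forall X : 'M[R]_(n.+1),
     vertex C X <->
     exists S : {set 'I_n}, X = one_plus_xS R S *m (one_plus_xS R S)^T).
Proof.
move=> hC.
have hCE : forall Z, C Z -> ellE Z.
  by case: hC => [->|[->|->]] Z // [].
have hCcut : forall S, C (cutm R S).
  by case: hC => [->|[->|->]] S; [exact: cut_ellE|exact: cut_ellE'|exact: cut_ellE''].
split.
- move=> X hCX; split.
    move=> hv; rewrite (allpm_cut (hCE _ hCX) (vertex_pm hC hv)); exact: cut_rank.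
  move=> hr; rewrite (allpm_cut (hCE _ hCX) (rank1_pm (hCE _ hCX) hr)).
  by apply: cut_vertex.
- move=> X; split.
    move=> hv; exists [set j | X ord0 (idx j) == 1].
    exact: (allpm_cut (hCE _ (proj1 hv)) (vertex_pm hC hv)).
  by move=> [S ->]; apply: (cut_vertex (C := C)).
Qed.
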